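(* Let $n$ be a positive integer and $d\in\Delta(n)$. Write $d=(d_1,\dots,d_L)$ with $d_L>0$ its last nonzero entry and let $q=\max_k d_k$, so that $d=(1,2,\dots,q,d_{q+1},\dots,d_L)$ with $d_{q+1}\le q$. Set $b_i=d_i-d_{i+1}$ for $q\le i<L$ and $b_L=d_L$. Then \[\big|\,[\,d\,]_q\,\big|=\big|\,[\,d\,]\cap\mathcal{P}(n,q)\,\big|=\prod_{i=q}^{L-1}\binom{b_i+b_{i+1}}{b_i},\] where an empty product equals $1$.
   Context: A partition of a positive integer $n$ is a finite non-increasing sequence $\alpha=(\alpha_1,\dots,\alpha_l)$ of positive integers with sum $n$; $\mathcal{P}(n)$ is the set of partitions of $n$, $\alpha_i=0$ for $i>l$, and $\mathcal{P}(n,k)$ is the set of partitions of $n$ with exactly $k$ nonzero parts. The diagonal sequence is $\delta(\alpha)=(d_k)_{k\ge1}$ with $d_k=|\{i:1\le i\le k,\ \alpha_i+i-1\ge k\}|$, trailing zeros omitted; $\Delta(n)=\{\delta(\alpha):\alpha\in\mathcal{P}(n)\}$, $[\,d\,]=\{\alpha\in\mathcal{P}(n):\delta(\alpha)=d\}$, and $[\,d\,]_k=[\,d\,]\cap\mathcal{P}(n,k)$. *)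

(* Defs.v *)
From mathcomp Require Import all_boot.
Set Implicit Arguments. Unset Strict Implicit. Unset Printing Implicit Defensive.

(* A partition of n: a finite non-increasing sequence of positive integers
   with sum n.  alpha_i (1-based) is nth 0 a (i-1), and alpha_i = 0 for i > l. *)
Definition is_partition (n : nat) (a : seq nat) : bool :=
  [&& all (fun x => 0 < x) a, sorted geq a & sumn a == n].

Definition is_partition_k (n k : nat) (a : seq nat) : bool :=
  is_partition n a && (size a == k).

Definition diag_entry (a : seq nat) (k : nat) : nat :=
  count (fun i => k <= nth 0 a i.-1 + i.-1) (iota 1 k).

Fixpoint rtrim (s : seq nat) : seq nat :=
  match s with
  | [::] => [::]
  | x :: s' => let t := rtrim s' in
               if (t == [::]) && (x == 0) then [::] else x :: t
  end.

(* diagonal sequence delta(alpha) = (d_1, d_2, ...), trailing zeros omitted.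
   d_k = 0 for k > sumn a (since alpha_i + i - 1 <= sumn a), so it suffices
   to compute d_1 .. d_(sumn a). *)
Definition delta (a : seq nat) : seq nat :=
  rtrim [seq diag_entry a k | k <- iota 1 (sumn a)].

Definition in_Delta (n : nat) (d : seq nat) : Prop :=
  exists a, is_partition n a /\ delta a = d.

Definition card_is (P : seq nat -> Prop) (N : nat) : Prop :=
  exists s : seq (seq nat), [/\ uniq s, size s = N & forall a, a \in s <-> P a].

(* Main.v *)
Require Import Defs.
From mathcomp Require Import all_boot zify.
Set Implicit Arguments. Unset Strict Implicit. Unset Printing Implicit Defensive.

Definition rel1 (x y : nat) := y <= x.+1.
Definition valid (s : seq nat) := sorted rel1 s.

Fixpoint wd (n i : nat) : seq (seq bool) :=
  match n with
  | 0 => if i == 0 then [:: [::]] else [::]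
  | n'.+1 => (if i is i'.+1 then map (cons false) (wd n' i') else [::])
             ++ map (cons true) (wd n' i)
  end.

Lemma wd_size n i : size (wd n i) = 'C(n, i).
Proof.
elim: n i => [|n IH] [|i] //=; rewrite ?size_cat ?size_map ?IH ?bin0 //.
by rewrite binS addnC.
Qed.

Lemma mem_cons_map (b b' : bool) w (l : seq (seq bool)) :
  (b :: w \in map (cons b') l) = (b == b') && (w \in l).
Proof.
apply/mapP/andP => [[w' Hw' [-> ->]] | [/eqP -> Hw]]; first by split.
by exists w.
Qed.

Lemma nil_map (b : bool) (l : seq (seq bool)) : ([::] \in map (cons b) l) = false.
Proof. by apply/mapP => [[w _]]. Qed.

Lemma mem_wd n i w : (w \in wd n i) = (size w == n) && (count negb w == i).
Proof.
elim: n i w => [|n IH] i [|b w] /=.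
- by case: i.
- by case: i.
- by case: i => [|i]; rewrite /= ?mem_cat ?nil_map.
- rewrite mem_cat mem_cons_map eqSS IH.
  case: i => [|i]; case: b => /=; rewrite ?mem_cons_map ?IH //=; try by rewrite orbF.
by rewrite add1n andbF.
Qed.

Lemma uniq_wd n i : uniq (wd n i).
Proof.
elim: n i => [|n IH] [|i] //=.
  by rewrite map_inj_uniq // => x y [].
rewrite cat_uniq !map_inj_uniq ?IH //=; try by move=> x y [].
rewrite andbT; apply/hasPn => w /mapP [w1 _ ->]; by rewrite mem_cons_map.
Qed.
Fixpoint splitT (T : nat) (s : seq nat) : seq nat * seq nat :=
  match s with
  | [::] => ([::], [::])
  | x :: s' => if x == T then ([::], s') else
      let: (p, r) := splitT T s' in (x :: p, r)
  end.

Fixpoint ins (T : nat) (w : seq bool) (s : seq nat) : seq nat :=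
  match w with
  | [::] => s
  | true :: w' => T.+1 :: ins T w' s
  | false :: w' => (splitT T s).1 ++ T :: ins T w' (splitT T s).2
  end.

Definition ext (T : nat) (e : seq nat) := [seq x == T.+1 | x <- e & T <= x].

Lemma splitT_spec T s : T \in s ->
  s = (splitT T s).1 ++ T :: (splitT T s).2 /\ T \notin (splitT T s).1.
Proof.
elim: s => [|x s IH] //=; rewrite in_cons.
case: (eqVneq x T) => [-> | nx] //= Hs.
case: (splitT T s) IH => p r /= IH.
have [E nT] := IH Hs. rewrite /= {1}E in_cons; split => //.
by rewrite negb_or eq_sym nx.
Qed.


Lemma ins_perm T w s : count_mem T s = count negb w ->
  perm_eq (ins T w s) (s ++ nseq (count id w) T.+1).
Proof.
elim: w s => [|b w IH] s /=; first by rewrite cats0.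
case: b => /= Hc.
  rewrite !add0n in Hc *.
  have H := IH s Hc; rewrite -(perm_cons T.+1) in H; apply: (perm_trans H).
  by rewrite -cat1s -[_ :: nseq _ _]cat1s perm_catCA.
have Ts : T \in s by rewrite -has_pred1 has_count Hc.
have [E nT] := splitT_spec Ts.
rewrite add0n [in X in perm_eq _ X]E -catA perm_cat2l /= perm_cons; apply: IH.
move: Hc; rewrite [in X in X = _]E count_cat /= eqxx.
by move/count_memPn: nT => ->; rewrite add0n add1n; case.
Qed.

Lemma split_hyp T s k : all (fun x => x <= T) s -> count_mem T s = k.+1 ->
  exists P R, splitT T s = (P, R) /\
   [/\ s = P ++ T :: R, all (fun x => x < T) P, all (fun x => x <= T) R
     & count_mem T R = k].
Proof.
move=> Hs Hc.
have Ts : T \in s by rewrite -has_pred1 has_count Hc.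
have [E nT] := splitT_spec Ts.
case: (splitT T s) E nT => P R /= E nT.
exists P, R; split => //.
move: Hs Hc; rewrite E all_cat /= count_cat /= eqxx => /and3P [HP _ HR].
move/count_memPn: (nT) => ->; rewrite add0n add1n => [[Hc]]; split => //.
apply/allP => x xP; have := allP HP x xP; rewrite leq_eqVlt => /orP [/eqP Ex|//].
by move: nT; rewrite -Ex xP.
Qed.

Lemma all_lt_of T s : all (fun x => x <= T) s -> count_mem T s = 0 ->
  all (fun x => x < T) s.
Proof.
move=> Hs /count_memPn nT; apply/allP => x xP; have := allP Hs x xP.
rewrite leq_eqVlt => /orP [/eqP Ex|//]. by move: nT; rewrite -Ex xP.
Qed.

Lemma ext_nil T s : all (fun x => x < T) s -> ext T s = [::].
Proof.
elim: s => [|x s IH] //= /andP [xT Hs]; rewrite /ext /=.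
by rewrite leqNgt xT /=; exact: IH.
Qed.

Lemma ext_cat T s1 s2 : ext T (s1 ++ s2) = ext T s1 ++ ext T s2.
Proof. by rewrite /ext filter_cat map_cat. Qed.

Lemma ins_filter T w s : all (fun x => x <= T) s -> count_mem T s = count negb w ->
  filter (fun x => x != T.+1) (ins T w s) = s.
Proof.
elim: w s => [|b w IH] s Hs Hc /=.
  apply/all_filterP; apply: sub_all Hs => x /= xT; by rewrite neq_ltn ltnS xT.
case: b Hc => /= Hc.
  by rewrite eqxx /=; apply: IH.
have [P [R [-> [E HP HR HcR]]]] := split_hyp Hs Hc.
rewrite /= filter_cat /= ltn_eqF // IH // E; congr (_ ++ _).
apply/all_filterP; apply: sub_all HP => x /=; rewrite neq_ltn => xT.
by rewrite (ltn_trans xT).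
Qed.

Lemma ext_ins T w s : all (fun x => x <= T) s -> count_mem T s = count negb w ->
  ext T (ins T w s) = w.
Proof.
elim: w s => [|b w IH] s Hs Hc /=.
  by apply: ext_nil; apply: all_lt_of.
case: b Hc => /= Hc.
  rewrite /ext /= leqnSn /= -/(ext T _) ; congr (_ :: _); [exact: eqxx | by apply: IH].
have [P [R [-> [E HP HR HcR]]]] := split_hyp Hs Hc.
rewrite /= ext_cat ext_nil // /ext /= leqnn /= ltn_eqF // -/(ext T _) IH //.
Qed.

Lemma path_top T p s : all (fun x => x <= T) s -> path rel1 p s -> path rel1 T.+1 s.
Proof.
case: s => [|x s] //= /andP [xT _] /andP [_ ->]; rewrite andbT /rel1.
by apply: (leq_trans xT); rewrite ltnW // ltnW.
Qed.

Lemma ins_path T w s p : all (fun x => x <= T) s -> count_mem T s = count negb w ->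
  path rel1 p s -> (head false w -> T <= p) -> path rel1 p (ins T w s).
Proof.
elim: w s p => [|b w IH] s p Hs Hc Hp Hh //=.
case: b Hc Hh => /= Hc Hh.
  rewrite {1}/rel1 ltnS Hh //=; apply: IH => //.
  - exact: path_top Hp.
have [P [R [-> [E HP HR HcR]]]] := split_hyp Hs Hc.
move: Hp; rewrite E /= !cat_path /= => /and3P [-> -> HpR] /=.
by apply: IH.
Qed.

Lemma filter_path T e x : x <= T.+1 -> all (fun y => y <= T.+1) e -> path rel1 x e ->
  path rel1 (if x == T.+1 then T else x) (filter (fun y => y != T.+1) e).
Proof.
elim: e x => [|y e IH] x //= xT /andP [yT He] /andP [yx Hp].
case: (eqVneq y T.+1) => [Ey | ny] /=.
  have -> : (if x == T.+1 then T else x) = T.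
    case: (eqVneq x T.+1) => // nx; move: yx xT nx; rewrite Ey /rel1; lia.
  by have := IH y yT He Hp; rewrite Ey eqxx.
have := IH y yT He Hp; rewrite (negbTE ny) => ->; rewrite andbT.
move: yx yT ny; rewrite /rel1; case: (eqVneq x T.+1) => [->|]; lia.
Qed.

Lemma filter_valid T e : all (fun y => y <= T.+1) e -> valid e ->
  valid (filter (fun y => y != T.+1) e).
Proof.
case: e => [|x e] //= /andP [xT He] Hp.
have := filter_path xT He Hp.
case: (eqVneq x T.+1) => [_|nx] /=; first exact: path_sorted.
by [].
Qed.

Lemma head_ext T e x : path rel1 x e -> x < T -> ~~ head false (ext T e).
Proof.
elim: e x => [|y e IH] x //= /andP [yx Hp] xT.
rewrite /ext /=; case: ifP => Ty /=.
  have -> : y = T by move: yx xT Ty; rewrite /rel1; lia.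
  by rewrite ltn_eqF.
apply: (IH y Hp); move: Ty; lia.
Qed.

Lemma ins_cons T w x s : x != T -> ~~ head false w -> ins T w (x :: s) = x :: ins T w s.
Proof.
move=> xT; case: w => [|[] w] //= _.
rewrite (negbTE xT); by case: (splitT T s).
Qed.

Lemma ins_ext T e : all (fun y => y <= T.+1) e -> valid e ->
  e = ins T (ext T e) (filter (fun y => y != T.+1) e).
Proof.
elim: e => [|x e IH] //= /andP [xT He] Hp.
have IH' := IH He (path_sorted Hp).
rewrite /ext /=.
case: (ltngtP x T) => [xlt | xgt | ->].
- have -> : (x != T.+1) = true by rewrite neq_ltn (ltn_trans xlt (ltnSn T)).
  rewrite -/(ext T _) ins_cons ?(ltn_eqF xlt) ?(head_ext Hp xlt) //; by congr (_ :: _).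
- have Ex : x = T.+1 by apply/eqP; rewrite eqn_leq xT xgt.
  subst x; rewrite /= eqxx /= -/(ext T _); by congr (_ :: _).
- rewrite /= (ltn_eqF (ltnSn T)) /= eqxx /= -/(ext T _); by congr (_ :: _).
Qed.

Definition Vspec (c : nat -> nat) (T : nat) (e : seq nat) :=
  valid e /\ forall x, count_mem x e = (if x <= T then c x else 0).

Lemma Vspec_all c T e : Vspec c T e -> all (fun x => x <= T) e.
Proof.
move=> [_ Hc]; apply/allP => x xe.
have : 0 < count_mem x e by rewrite -has_count has_pred1.
by rewrite Hc; case: (x <= T).
Qed.

Lemma sorted_top T s : all (fun x => x <= T) s -> valid s -> path rel1 T.+1 s.
Proof.
case: s => [|x s] //= /andP [xT _] Hs; rewrite /rel1 Hs andbT.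
by apply: (leq_trans xT); rewrite ltnW // ltnW.
Qed.

Lemma nseq_valid n x : valid (nseq n x).
Proof. elim: n => [|[|n] IH] //=; rewrite /rel1 leqnSn; exact: IH. Qed.

Lemma count_V c T : card_is (Vspec c T) (\prod_(i < T) 'C(c i + c i.+1, c i)).
Proof.
elim: T => [|T [L [uL sL mL]]].
  exists [:: nseq (c 0) 0]; split => //; first by rewrite big_ord0.
  move=> e; rewrite inE; split.
    move/eqP => ->; split; first exact: nseq_valid.
    by move=> x; rewrite count_nseq; case: x => [|x] /=; rewrite ?mul1n.
  move=> He; have /all_pred1P Ee : all (pred1 0) e.
    by apply: sub_all (Vspec_all He) => x; rewrite leqn0.
  have [_ Hc] := He; have := Hc 0; rewrite Ee count_nseq /= mul1n => ->.
  exact: eqxx.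
exists [seq ins T w s | s <- L, w <- wd (c T + c T.+1) (c T)]; split.
- apply: allpairs_uniq => //; first exact: uniq_wd.
  move=> [s1 w1] [s2 w2] /allpairsP [[s1' w1'] [/= H1 H2 [E1 E2]]].
  move=> /allpairsP [[s2' w2'] [/= H3 H4 [E3 E4]]] /= Heq; subst.
  have [Hv1 Hc1] := (mL s1').1 H1; have [Hv2 Hc2] := (mL s2').1 H3.
  move: H2 H4; rewrite !mem_wd => /andP [_ /eqP Hw1] /andP [_ /eqP Hw2].
  have A1 := Vspec_all ((mL s1').1 H1); have A2 := Vspec_all ((mL s2').1 H3).
  have C1 : count_mem T s1' = count negb w1' by rewrite Hc1 leqnn Hw1.
  have C2 : count_mem T s2' = count negb w2' by rewrite Hc2 leqnn Hw2.
  have Es : s1' = s2' by rewrite -(ins_filter A1 C1) Heq ins_filter.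
  have Ew : w1' = w2' by rewrite -(ext_ins A1 C1) Heq ext_ins.
  by rewrite Es Ew.
- by rewrite size_allpairs sL wd_size big_ord_recr.
move=> e; split.
  move=> /allpairsP [[s w] [/= Hs Hw ->]].
  have [Hv Hc] := (mL s).1 Hs; have A := Vspec_all ((mL s).1 Hs).
  move: Hw; rewrite mem_wd => /andP [/eqP Sw /eqP Cw].
  have C : count_mem T s = count negb w by rewrite Hc leqnn Cw.
  split.
    apply: path_sorted; apply: ins_path => //; first exact: sorted_top.
  have Ct : count id w = c T.+1.
    by have := count_predC id w; rewrite Sw Cw; lia.
  move=> x; rewrite (permP (ins_perm C)) count_cat count_nseq Ct Hc /=.
  case: (ltngtP x T.+1) => [xl|xg|->].
  - by rewrite ltnS in xl; rewrite xl mul0n addn0.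
  - by rewrite leqNgt (ltn_trans _ xg).
  - by rewrite ltnn mul1n.
move=> He; have [Hv Hc] := He; have A := Vspec_all He.
apply/allpairsP; exists (filter (fun y => y != T.+1) e, ext T e) => /=; split.
- apply/mL; split; first exact: filter_valid.
  move=> x; rewrite count_filter.
  case: (eqVneq x T.+1) => [->|nx].
    rewrite ltnn (@eq_count _ _ pred0) ?count_pred0 // => y /=.
    by case: (eqVneq y T.+1).
  rewrite (@eq_count _ _ (pred1 x)); last first.
    move=> y /=; case: (eqVneq y x) => [->|] //=; by rewrite nx.
  rewrite Hc; case: (ltngtP x T.+1) => [xl|xg|xe]; first by rewrite -ltnS xl.
    by rewrite leqNgt (ltn_trans (ltnSn T) xg).
  by rewrite xe eqxx in nx.
- rewrite mem_wd size_map size_filter count_map count_filter; apply/andP; split.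
    have := count_predUI (pred1 T) (pred1 T.+1) e.
    rewrite (@eq_count _ (predI _ _) pred0) ?count_pred0; last first.
      by move=> y /=; case: (eqVneq y T) => // ->; rewrite (ltn_eqF (ltnSn T)).
    rewrite (@eq_in_count _ (predU _ _) (fun y => T <= y)); last first.
      move=> y ye /=; have := allP A y ye; case: (ltngtP y T) => [yl|yg|->] /=.
      + by move=> _; rewrite (ltn_eqF (ltn_trans yl (ltnSn T))).
      + by move=> H; apply/eqP; lia.
      + by [].
    by rewrite addn0 !Hc leqnn leqnSn => ->.
  rewrite (@eq_in_count _ _ (pred1 T)); first by rewrite Hc leqnSn.
  move=> y ye /=; have := allP A y ye; case: (ltngtP y T) => [yl|yg|->] /=.
  + by rewrite andbF.
  + by move=> H; rewrite andbT; apply/negbF/eqP; lia.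
  + by rewrite andbT (ltn_eqF (ltnSn T)).
- exact: ins_ext.
Qed.

Lemma nth_rtrim s i : nth 0 (rtrim s) i = nth 0 s i.
Proof.
elim: s i => [|x s IH] i //=.
case: (eqVneq (rtrim s) [::]) => [Hr|Hr]; case: (eqVneq x 0) => [Hx|Hx] /=;
  try (case: i => [|i] //=; exact: IH).
case: i => [|i] /=; first by rewrite Hx.
by rewrite -IH Hr nth_nil.
Qed.

Lemma last_rtrim s : last 1 (rtrim s) != 0.
Proof.
elim: s => [|x s IH] //=.
case: (eqVneq (rtrim s) [::]) => [Hr|Hr]; case: (eqVneq x 0) => [Hx|Hx] //=.
- by rewrite Hr.
- by case: (rtrim s) Hr IH.
- by case: (rtrim s) Hr IH.
Qed.

Lemma sumn_rtrim s : sumn (rtrim s) = sumn s.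
Proof.
elim: s => [|x s IH] //=.
case: (eqVneq (rtrim s) [::]) => [Hr|Hr]; case: (eqVneq x 0) => [Hx|Hx] //=;
  by rewrite -IH ?Hr ?Hx.
Qed.

Lemma last_nth_size s : last 1 s != 0 -> forall k, size s <= k.+1 -> k.+1 < size s = false ->
  True.
Proof. by []. Qed.

Lemma eq_trim s t : last 1 s != 0 -> last 1 t != 0 ->
  (forall i, nth 0 s i = nth 0 t i) -> s = t.
Proof.
move=> Hs Ht H.
have key : forall u v, last 1 u != 0 -> (forall i, nth 0 u i = nth 0 v i) ->
    size u <= size v.
  move=> u v Hu Huv; rewrite leqNgt; apply/negP => lt.
  case: u Hu Huv lt => [|x u] //= Hu Huv lt.
  have := Huv (size u); rewrite (nth_default 0 lt).
  by rewrite -[size u]/((size (x :: u)).-1) nth_last /= => E; rewrite E in Hu.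
apply: (@eq_from_nth _ 0) => [|i _]; last exact: H.
by apply/eqP; rewrite eqn_leq !key // => i; rewrite H.
Qed.

Definition E (a : seq nat) k := count (fun j => k <= nth 0 a j + j) (iota 0 k).

Lemma diag_E a k : diag_entry a k = E a k.
Proof.
rewrite /diag_entry /E -[1]/(1 + 0) iotaDl count_map.
by apply: eq_count => j /=.
Qed.

Lemma nth_sum a j : all (fun x => 0 < x) a -> j < size a -> nth 0 a j + j <= sumn a.
Proof.
elim: a j => [|x a IH] [|j] //= /andP [xp Ha] jl.
  by rewrite addn0 leq_addr.
have := IH j Ha jl; lia.
Qed.

Lemma E_big a k : all (fun x => 0 < x) a -> sumn a < k -> E a k = 0.
Proof.
move=> Ha Hk; apply/eqP; rewrite -leqn0 leqNgt -has_count; apply/hasPn => j.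
rewrite mem_iota /= add0n => jk; rewrite -ltnNge.
case: (ltnP j (size a)) => js.
  by apply: leq_ltn_trans (nth_sum Ha js) Hk.
by rewrite nth_default // add0n.
Qed.

Lemma nth_delta a i : all (fun x => 0 < x) a -> nth 0 (delta a) i = E a i.+1.
Proof.
move=> Ha; rewrite /delta nth_rtrim.
case: (ltnP i (sumn a)) => Hi.
  by rewrite (nth_map 0) ?size_iota // nth_iota // diag_E add1n.
by rewrite nth_default ?size_map ?size_iota // E_big.
Qed.

Lemma delta_eq a d : all (fun x => 0 < x) a -> last 1 d != 0 ->
  (delta a = d <-> forall k, E a k.+1 = nth 0 d k).
Proof.
move=> Ha Hd; split => [<- k|H]; first by rewrite nth_delta.
apply: eq_trim => //; first exact: last_rtrim.
by move=> i; rewrite nth_delta.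
Qed.

Lemma E0 a : E a 0 = 0.
Proof. by []. Qed.

Lemma E_cons x a k : E (x :: a) k.+1 = (k < x) + E a k.
Proof.
rewrite /E /= addn0; congr (_ + _).
rewrite -[1]/(1 + 0) iotaDl count_map.
by apply: eq_count => j /=; rewrite add1n addnS ltnS.
Qed.

Lemma sum_lt x N : \sum_(k < N) (k < x : nat) = minn x N.
Proof.
elim: N => [|N IH]; first by rewrite big_ord0 minn0.
rewrite big_ord_recr /= IH.
case: (ltnP N x) => H /=; lia.
Qed.

Lemma sumE a N : all (fun x => 0 < x) a -> sumn a <= N -> \sum_(k < N) E a k.+1 = sumn a.
Proof.
elim: a N => [|x a IH] N /=.
  move=> _ _; apply: big1 => k _.
  apply/eqP; rewrite -leqn0 leqNgt -has_count; apply/hasPn => j.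
  by rewrite mem_iota /= add0n nth_nil add0n => jk; rewrite -ltnNge.
move=> /andP [xp Ha] HN.
rewrite (eq_bigr (fun k : 'I_N => (k < x : nat) + E a k)); last by move=> k _; rewrite E_cons.
rewrite big_split /= sum_lt.
case: N HN => [|N] HN; first by move: xp HN; lia.
rewrite big_ord_recl E0 add0n IH //; last by move: xp HN; lia.
by move: HN; lia.
Qed.

Lemma sumn_delta a : all (fun x => 0 < x) a -> sumn (delta a) = sumn a.
Proof.
move=> Ha; rewrite /delta sumn_rtrim sumnE big_map.
have -> : iota 1 (sumn a) = index_iota 1 (sumn a).+1 by rewrite /index_iota subn1.
rewrite big_add1 /= big_mkord.
transitivity (\sum_(k < sumn a) E a k.+1); last exact: sumE.
by apply: eq_bigr => k _; rewrite diag_E.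
Qed.

Lemma sorted_nth_geq a j : sorted geq a -> nth 0 a j.+1 <= nth 0 a j.
Proof.
elim: a j => [|x a IH] j //= Hp.
case: j => [|j] /=.
  by case: a Hp {IH} => [|y a] //= /andP [].
exact: IH (path_sorted Hp).
Qed.

Lemma count_split k (f : nat -> nat) l :
  count (fun j => k.+1 <= f j) l + count (fun j => f j == k) l =
  count (fun j => k <= f j) l.
Proof.
elim: l => //= x l <-.
case: (ltngtP k (f x)) => H /=; lia.
Qed.

Lemma E_le a k : E a k <= k.
Proof. by rewrite /E; apply: leq_trans (count_size _ _) _; rewrite size_iota. Qed.

Lemma E_step a k : sorted geq a -> E a k < E a k.+1 -> E a k = k.
Proof.
move=> Hs.
set e := fun j => nth 0 a j + j.
have -> : E a k.+1 = count (fun j => k.+1 <= e j) (iota 0 k) + (k.+1 <= e k).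
  by rewrite /E -addn1 iotaD count_cat /= addn0.
have -> : E a k = count (fun j => k.+1 <= e j) (iota 0 k) + count (fun j => e j == k) (iota 0 k).
  by rewrite count_split.
case Hc : (k.+1 <= e k) => /= H; first last.
  by move: H; lia.
have B0 : count (fun j => e j == k) (iota 0 k) = 0 by move: H; lia.
have notk : forall j, j < k -> e j != k.
  move=> j jk; apply/negP => Ej.
  have : 0 < count (fun j => e j == k) (iota 0 k).
    by rewrite -has_count; apply/hasP; exists j; rewrite ?mem_iota ?Ej.
  by rewrite B0.
have all_m : forall m, m <= k -> k.+1 <= e (k - m).
  elim => [|m IH] mk; first by rewrite subn0.
  have := IH (ltnW mk).
  have E1 : k - m = (k - m.+1).+1 by lia.
  rewrite E1 => H1.
  have H2 : e (k - m.+1).+1 <= (e (k - m.+1)).+1.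
    by rewrite /e addnS ltnS leq_add2r sorted_nth_geq.
  have H3 := notk (k - m.+1) ltac:(lia).
  move: H1 H2 H3; rewrite neq_ltn; lia.
rewrite B0 addn0.
have : all (fun j => k.+1 <= e j) (iota 0 k).
  apply/allP => j; rewrite mem_iota add0n => /andP [_ jk].
  by have := all_m (k - j) (leq_subr _ _); rewrite subKn ?(ltnW jk).
by rewrite all_count size_iota => /eqP.
Qed.

Lemma max_in (d : seq nat) : \max_(x <- d) x \in 0 :: d.
Proof.
elim: d => [|x d IH]; first by rewrite big_nil inE.
rewrite big_cons !inE.
case: (leqP x (\max_(y <- d) y)) => H.
  by move: IH; rewrite inE => /orP [->|->]; rewrite ?orbT.
by rewrite eqxx orbT.
Qed.

Lemma sorted_map_iota (r : rel nat) (f : nat -> nat) m n :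
  (forall j, m <= j -> j.+1 < m + n -> r (f j) (f j.+1)) ->
  sorted r [seq f j | j <- iota m n].
Proof.
elim: n m => [|n IH] m H //=.
case: n IH H => [|n] IH H //=.
rewrite (H m) ?leqnn //; last by lia.
have := IH m.+1; rewrite /= => -> // j mj jl; apply: H; lia.
Qed.

Lemma valid_nth e j : valid e -> j.+1 < size e -> nth 0 e j.+1 <= (nth 0 e j).+1.
Proof.
elim: e j => [|x e IH] j //= Hp.
case: j => [|j] /= jl.
  by case: e Hp {IH} jl => [|y e] //= /andP [].
exact: IH (path_sorted Hp) jl.
Qed.

Definition eofa q (a : seq nat) := [seq nth 0 a j + j | j <- iota 0 q].
Definition aofe q (e : seq nat) := [seq nth 0 e j - j | j <- iota 0 q].

Lemma E_eofa q a k : size a = q -> q <= k -> E a k = count (fun y => k <= y) (eofa q a).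
Proof.
move=> sa qk; rewrite /E /eofa count_map.
have -> : iota 0 k = iota 0 (q + (k - q)) by rewrite subnKC.
rewrite iotaD count_cat add0n.
rewrite (@eq_in_count _ _ pred0 (iota q (k - q))); last first.
  move=> j; rewrite mem_iota => /andP [qj jk] /=.
  rewrite nth_default ?sa // add0n; apply/negbTE; rewrite -ltnNge; lia.
by rewrite count_pred0 addn0.
Qed.

Lemma E_small a k : (forall j, j < k -> k <= nth 0 a j + j) -> E a k = k.
Proof.
move=> H.
have : all (fun j => k <= nth 0 a j + j) (iota 0 k).
  by apply/allP => j; rewrite mem_iota add0n => /andP [_ /H].
by rewrite all_count size_iota => /eqP.
Qed.

Lemma count_split' k l :
  count (fun j => k.+1 <= j) l + count_mem k l = count (fun j => k <= j) l.
Proof. exact: (count_split k id l). Qed.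

Unset Implicit Arguments.

Theorem proposition4p4 (n : nat) (d : seq nat) :
  0 < n -> in_Delta n d ->
  let L := size d in
  let q := \max_(x <- d) x in
  let b := fun i => nth 0 d i.-1 - nth 0 d i in
  card_is (fun a => is_partition_k n q a /\ delta a = d)
          (\prod_(q <= i < L) 'C(b i + b i.+1, b i)).
Proof.
move=> npos [a0 [Pa0 Da0]] L q b.
have /and3P [pos0 sort0 /eqP sum0] := Pa0.
have lastd : last 1 d != 0 by rewrite -Da0 last_rtrim.
have Hd : forall k, nth 0 d k = E a0 k.+1 by move=> k; rewrite -Da0 nth_delta.
have F1 : E a0 1 = 1.
  case: a0 pos0 sum0 {Pa0 Da0 Hd sort0} => [|x a] /=.
    by move=> _ H; rewrite -H in npos.
  by move=> /andP [xp _] _; rewrite /E /=; case: x xp.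
have F2 : forall k, nth 0 d k <= q.
  move=> k; case: (ltnP k (size d)) => kd; last by rewrite nth_default.
  by apply: leq_bigmax_seq => //; exact: mem_nth.
have q1 : 1 <= q by have := F2 0; rewrite Hd F1.
have [j Hj] : exists j, E a0 j = q.
  have := max_in d; rewrite -/q inE => /orP [/eqP q0|qd].
    by rewrite q0 in q1.
  by exists (index q d).+1; rewrite -Hd nth_index.
have Gle : forall i, E a0 i <= q.
  by case => [|i]; rewrite ?E0 // -Hd F2.
have Fq : E a0 q = q.
  elim: j Hj => [|i IH] Hi; first by rewrite E0 in Hi; rewrite -Hi in q1.
  case: (eqVneq (E a0 i) q) => [Ei|Ei]; first exact: IH.
  have lt : E a0 i < E a0 i.+1 by rewrite Hi ltn_neqAle Ei Gle.
  have Ei' := E_step sort0 lt.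
  have H2 : E a0 i.+1 = i.+1 by have := E_le a0 i.+1; move: lt; rewrite Ei'; lia.
  have Hq : q = i.+1 by rewrite -Hi.
  by rewrite Hq.
clear j Hj.
have Fsmall : forall k, k <= q -> E a0 k = k.
  have allq : all (fun j => q <= nth 0 a0 j + j) (iota 0 q).
    by rewrite all_count size_iota; apply/eqP; exact: Fq.
  move=> k kq; apply: E_small => i ik.
  have := allP allq i; rewrite mem_iota add0n => /(_ (leq_trans ik kq)).
  exact: leq_trans.
have Fdec : forall k, q <= k -> E a0 k.+1 <= E a0 k.
  move=> k qk; rewrite leqNgt; apply/negP => lt.
  have Ek := E_step sort0 lt.
  have := E_le a0 k.+1; have := Gle k.+1; move: lt; rewrite Ek; lia.
have qL : q <= L.
  rewrite leqNgt; apply/negP => lt.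
  have := Hd q.-1; rewrite nth_default; last by rewrite /L in lt; lia.
  by rewrite prednK // Fq => q0; rewrite -q0 in q1.
have bE : forall i, 1 <= i -> b i = E a0 i - E a0 i.+1.
  by move=> i i1; rewrite /b !Hd prednK.
have b0 : forall i, i < q -> b i = 0.
  case => [|i] iq; first by rewrite /b /= subnn.
  rewrite bE // !Fsmall //; [lia | exact: ltnW].
have bL : forall i, L < i -> b i = 0.
  by move=> i Li; rewrite /b !nth_default //; rewrite /L in Li; lia.
have [Ls [uLs sLs mLs]] := count_V b L.
have Vb : forall e, Vspec b L e <-> valid e /\ forall x, count_mem x e = b x.
  move=> e; split => [[v H]|[v H]]; split => // x; rewrite H;
    case: leqP => // xl; by rewrite bL.
have C1 : forall e, (forall x, count_mem x e = b x) ->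
    forall k, q <= k -> count (fun y => k <= y) e = E a0 k.
  move=> e He.
  have eL : forall y, y \in e -> y <= L.
    move=> y ye; rewrite leqNgt; apply/negP => Ly.
    have := He y; rewrite bL // => /count_memPn; by rewrite ye.
  have Hbig : forall k, L < k -> count (fun y => k <= y) e = E a0 k.
    move=> k Lk.
    have -> : E a0 k = 0.
      by rewrite -(prednK (leq_ltn_trans (leq0n L) Lk)) -Hd nth_default //; rewrite /L in Lk; lia.
    apply/eqP; rewrite -leqn0 leqNgt -has_count; apply/hasPn => y ye.
    have := eL y ye; rewrite -ltnNge; lia.
  suff H : forall m k, q <= k -> L < k + m -> count (fun y => k <= y) e = E a0 k.
    by move=> k qk; apply: (H L.+1) => //; lia.
  elim => [|m IH] k qk Lk; first by apply: Hbig; rewrite addn0 in Lk.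
  case: (ltnP L k) => Lk'; first exact: Hbig.
  rewrite -count_split' IH; last by lia.
    rewrite He bE; last by lia.
    have := Fdec k qk; lia.
  by apply: leq_trans qk _.
have C2 : forall e, (forall x, count_mem x e = b x) ->
    all (fun y => q <= y) e /\ size e = q.
  move=> e He.
  have allq : all (fun y => q <= y) e.
    apply/allP => y ye; rewrite leqNgt; apply/negP => yq.
    have := He y; rewrite b0 // => /count_memPn; by rewrite ye.
  split => //; move: allq; rewrite all_count (C1 e He) // Fq => /eqP <-.
  by [].
have fwd : forall a, is_partition_k n q a /\ delta a = d ->
    Vspec b L (eofa q a) /\ aofe q (eofa q a) = a.
  move=> a [/andP [/and3P [posa sorta /eqP suma] /eqP sizea] Da].
  have Ea : forall k, E a k.+1 = E a0 k.+1.
    by move=> k; rewrite (proj1 (delta_eq posa lastd) Da) Hd.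
  have Ek : forall k, q <= k -> count (fun y => k <= y) (eofa q a) = E a0 k.
    move=> k qk; rewrite -E_eofa // -(prednK (leq_trans q1 qk)) Ea.
    by rewrite (prednK (leq_trans q1 qk)).
  have seofa : size (eofa q a) = q by rewrite size_map size_iota.
  have allq : all (fun y => q <= y) (eofa q a).
    by rewrite all_count Ek // Fq seofa.
  split.
  - apply/Vb; split.
      apply: sorted_map_iota => i _ iq; rewrite /rel1 addnS ltnS leq_add2r.
      exact: sorted_nth_geq.
    move=> x; case: (ltnP x q) => xq.
      rewrite b0 //; apply/count_memPn; apply/negP => xin.
      by have := allP allq x xin; rewrite leqNgt xq.
    have := count_split' x (eofa q a); rewrite (Ek x xq) (Ek x.+1 (leq_trans xq (leqnSn x))) => H.
    rewrite bE ?(leq_trans q1 xq) //; move: H (Fdec x xq); lia.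
  - apply: (@eq_from_nth _ 0); rewrite ?size_map ?size_iota //.
    move=> i iq; rewrite (nth_map 0) ?size_iota // nth_iota // add0n.
    by rewrite (nth_map 0) ?size_iota // nth_iota // add0n addnK.
have bwd : forall e, Vspec b L e ->
    (is_partition_k n q (aofe q e) /\ delta (aofe q e) = d) /\ eofa q (aofe q e) = e.
  move=> e /Vb [v Hc]; have [allq se] := C2 e Hc.
  have qe : forall j, j < q -> q <= nth 0 e j.
    by move=> j jq; apply: (allP allq); apply: mem_nth; rewrite se.
  have nthA : forall j, j < q -> nth 0 (aofe q e) j + j = nth 0 e j.
    move=> j jq; rewrite (nth_map 0) ?size_iota // nth_iota // add0n subnK //.
    exact: leq_trans (ltnW jq) (qe j jq).
  have eofa_aofe : eofa q (aofe q e) = e.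
    apply: (@eq_from_nth _ 0); rewrite ?size_map ?size_iota ?se //.
    by move=> i iq; rewrite (nth_map 0) ?size_iota // nth_iota // add0n nthA.
  set a := aofe q e.
  have sa : size a = q by rewrite size_map size_iota.
  have posa : all (fun x => 0 < x) a.
    apply/allP => x /mapP [i]; rewrite mem_iota add0n => /andP [_ iq] ->.
    by rewrite subn_gt0; apply: leq_trans iq (qe i iq).
  have sorta : sorted geq a.
    apply: sorted_map_iota => i _ iq /=.
    have := valid_nth v (j := i); rewrite se => /(_ iq) H.
    have := qe i (ltnW iq); have := qe i.+1 iq; move: H iq; lia.
  have Ea : forall k, E a k.+1 = nth 0 d k.
    move=> k; rewrite Hd; case: (ltnP k.+1 q) => kq.
      rewrite Fsmall ?(ltnW kq) // E_small // => i ik.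
      rewrite nthA; last by lia.
      by apply: leq_trans (ltnW kq) (qe i _); lia.
    by rewrite (E_eofa sa kq) eofa_aofe (C1 e Hc).
  have Da : delta a = d by apply/(delta_eq posa lastd).
  split => //; split => //.
  rewrite /is_partition_k /is_partition posa sorta sa eqxx /= andbT.
  by rewrite -(sumn_delta posa) Da -Da0 sumn_delta // sum0.
exists (map (aofe q) Ls); split.
- rewrite map_inj_in_uniq // => e1 e2 H1 H2 Heq.
  rewrite -(bwd e1 ((mLs e1).1 H1)).2 -(bwd e2 ((mLs e2).1 H2)).2.
  by rewrite Heq.
- rewrite size_map sLs -(big_mkord xpredT (fun i => 'C(b i + b i.+1, b i))) (big_cat_nat (leq0n q) qL) /=.
  rewrite [X in X * _ = _]big1_seq ?mul1n // => i /andP [_].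
  by rewrite mem_index_iota => /andP [_ iq]; rewrite b0 // bin0.
- move=> a; split.
    by move=> /mapP [e He ->]; exact: (bwd e ((mLs e).1 He)).1.
  move=> Ha; have [V Ea] := fwd a Ha; rewrite -Ea; apply: map_f; exact/mLs.
Qed.
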